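(* With the notation below, for $1\le i\le r$ let $W_{p_i} = \eta_M(W) \cap \mathrm{GL}(e_i,p_i)$. Then: (a) $\eta_M(W) = W_{p_1}\times\cdots\times W_{p_r}$; (b) $W_{p_i} = \mathrm{Stab}_{C_{p_i}}([\epsilon_{p_i}])$ for $1 \le i \le r$.
   Context: Let $G$ be a finite group of $F$-class $\ge 1$ whose $F$-rank (the order $|\nu_0(G)/\nu_1(G)|$, where $\nu_0(G)=F(G)$ is the Fitting subgroup and $\nu_1(G)=\Phi(F(G))$) has prime divisors $p_1,\dots,p_r$, and $k=p_1\cdots p_r$. With $F$ free on $f_1,\dots,f_n$, $\mu:F\to G$ an epimorphism, $R=\ker\mu$, $L=\mu^{-1}(F(G))$, put $G^*=F/[R,L]R^k$ and $M=R/[R,L]R^k$, an abelian normal subgroup of $G^*$ with $G^*/M=G$. Then $M=M_{p_1}\times\cdots\times M_{p_r}$ with $M_{p_i}$ its Sylow $p_i$-subgroup, elementary abelian of rank $e_i$, so $\mathrm{Aut}(M)=\mathrm{GL}(e_1,p_1)\times\cdots\times\mathrm{GL}(e_r,p_r)$. $\mathrm{Aut}_M(G^* )$ is the group of automorphisms of $G^*$ leaving $M$ invariant; $\eta_G$ maps $\alpha$ to the induced automorphism of $G^*/M=G$, $\eta_M$ maps $\alpha$ to $\alpha|_M$, and $W=\ker\eta_G$. $G$ acts on $M$ via conjugation in $G^*$; $C_{p_i}$ is the centralizer in $\mathrm{Aut}(M_{p_i})=\mathrm{GL}(e_i,p_i)$ of the induced action of $G$ on $M_{p_i}$. Let $\epsilon\in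 Z^2(G,M)$ define $G^*$ as extension of $M$ by $G$ and write $\epsilon=\epsilon_{p_1}+\cdots+\epsilon_{p_r}$ with $\epsilon_{p_i}\in Z^2(G,M_{p_i})$ (using $Z^2(G,M)=\bigoplus_i Z^2(G,M_{p_i})$), and $[\epsilon_{p_i}]=\epsilon_{p_i}+B^2(G,M_{p_i})$. $C_{p_i}$ acts on $H^2(G,M_{p_i})$ via $c([\delta])=[c\circ\delta]$. *)

(* Defs.v *)
From HB Require Import structures.
From mathcomp Require Import all_boot all_fingroup all_solvable.
Set Implicit Arguments.
Unset Strict Implicit.
Unset Printing Implicit Defensive.
Local Open Scope group_scope.

Section ExtDefs.
Variable gT : finGroupType.

Definition AutInv (E M : {group gT}) : {set {perm gT}} :=
  [set a in Aut E | [set a x | x in M] == (M : {set gT})].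

(* W = ker eta_G: those alpha in Aut_M(E) inducing the identity on E/M. *)
Definition Wker (E M : {group gT}) : {set {perm gT}} :=
  [set a in AutInv E M | [forall x in E, coset M (a x) == coset M x]].

Definition etaMW (E M : {group gT}) : {set {perm gT}} :=
  [set restr_perm M a | a in Wker E M].

(* The factor GL(e_p, p) = Aut(M_p) of Aut(M) = prod_p Aut(M_p), viewed
   inside Aut M as the automorphisms acting trivially on the p'-part. *)
Definition AutComp (M : {group gT}) (p : nat) : {set {perm gT}} :=
  [set c in Aut M | [forall x in 'O_p^'(M), c x == x]].

Definition Cent_p (E M : {group gT}) (p : nat) : {set {perm gT}} :=
  [set c in AutComp M p |
     [forall y in E, forall m in 'O_p(M), c (m ^ y) == c m ^ y]].

Definition ext_cocycle (M : {group gT}) (s : coset_of M -> gT)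
  (g h : coset_of M) : gT := s g * s h * (s (g * h))^-1.

Definition ext_cocycle_p (M : {group gT}) (s : coset_of M -> gT) (p : nat)
  (g h : coset_of M) : gT := (ext_cocycle s g h).`_p.

(* delta in B^2(G, M_p) (multiplicative notation; G acts on the left by
   g . m = s(g) m s(g)^-1). *)
Definition is_coboundary_p (E M : {group gT}) (p : nat) (s : coset_of M -> gT)
  (delta : coset_of M -> coset_of M -> gT) : bool :=
  [exists f : {ffun coset_of M -> gT},
     [forall g in E / M, f g \in 'O_p(M)] &&
     [forall g in E / M, forall h in E / M,
        delta g h == f g * (f h) ^ (s g)^-1 * (f (g * h))^-1]].

(* Stab_{C_p}([epsilon_p]) : c([eps_p]) = [c o eps_p] equals [eps_p],
   i.e. c o eps_p - eps_p in B^2(G, M_p). *)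
Definition StabCoh (E M : {group gT}) (p : nat) (s : coset_of M -> gT)
  : {set {perm gT}} :=
  [set c in Cent_p E M p |
     is_coboundary_p E p s
       (fun g h => c (ext_cocycle_p s p g h) * (ext_cocycle_p s p g h)^-1)].

End ExtDefs.

(* Main.v *)
Require Import Defs.
From HB Require Import structures.
From mathcomp Require Import all_boot all_fingroup all_solvable.
Set Implicit Arguments.
Unset Strict Implicit.
Unset Printing Implicit Defensive.
Local Open Scope group_scope.

Lemma autM (gT : finGroupType) (A : {group gT}) (c : {perm gT}) x y :
  c \in Aut A -> x \in A -> y \in A -> c (x * y) = c x * c y.
Proof. by move=> Ac Ax Ay; rewrite -(autmE Ac) morphM. Qed.

Lemma autV (gT : finGroupType) (A : {group gT}) (c : {perm gT}) x :
  c \in Aut A -> x \in A -> c (x^-1) = (c x)^-1.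
Proof. by move=> Ac Ax; rewrite -(autmE Ac) morphV. Qed.

Lemma aut1 (gT : finGroupType) (A : {group gT}) (c : {perm gT}) :
  c \in Aut A -> c 1 = 1.
Proof. by move=> Ac; rewrite -(autmE Ac) morph1. Qed.

Section Work.
Variables (gT : finGroupType) (E M : {group gT}) (s : coset_of M -> gT).
Hypotheses (nME : M <| E) (abM : abelian M)
  (hs : forall g, g \in E / M -> s g \in E /\ coset M (s g) = g).

Lemma sME : M \subset E. Proof. by case/andP: nME. Qed.
Lemma nM : E \subset 'N(M). Proof. by case/andP: nME. Qed.
Lemma inE_M x : x \in M -> x \in E. Proof. exact: (subsetP sME). Qed.
Lemma inN x : x \in E -> x \in 'N(M). Proof. exact: (subsetP nM). Qed.
Lemma sE g : g \in E / M -> s g \in E. Proof. by case/hs. Qed.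
Lemma cs g : g \in E / M -> coset M (s g) = g. Proof. by case/hs. Qed.

Lemma cmM x y : x \in M -> y \in M -> commute x y.
Proof. by move=> Mx My; apply: (centsP abM). Qed.

Lemma conjM x y : x \in M -> y \in M -> x ^ y = x.
Proof. by move=> Mx My; rewrite conjgE (cmM Mx My) mulKg. Qed.

Lemma memJM x y : x \in M -> y \in E -> x ^ y \in M.
Proof. by move=> Mx Ey; rewrite memJ_norm // inN. Qed.

Lemma coset_eqM x y : x \in E -> y \in E -> coset M x = coset M y -> x * y^-1 \in M.
Proof.
move=> Ex Ey exy; apply: coset_idr; first by rewrite groupM ?groupV ?inN.
rewrite morphM ?morphV ?groupV ?inN //. by rewrite /= exy mulgV.
Qed.

Lemma epsM g h : g \in E / M -> h \in E / M -> ext_cocycle s g h \in M.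
Proof.
move=> Gg Gh; rewrite /ext_cocycle; apply: coset_eqM.
- by rewrite groupM ?sE.
- by rewrite sE ?groupM.
by rewrite morphM ?inN ?sE //= !cs ?groupM.
Qed.

Lemma consttO pi x : x \in M -> x.`_pi \in 'O_pi(M).
Proof.
move=> Mx; rewrite (mem_normal_Hall (nilpotent_pcore_Hall pi (abelian_nil abM)) (pcore_normal _ _)).
  exact: p_elt_constt.
have: <[x]> \subset M by rewrite cycle_subG.
by move/subsetP; apply; apply: cycle_constt.
Qed.

Lemma memO pi x : x \in M -> (x \in 'O_pi(M)) = pi.-elt x.
Proof.
move=> Mx; rewrite (mem_normal_Hall (nilpotent_pcore_Hall pi (abelian_nil abM)) (pcore_normal _ _)) //.
Qed.

Lemma consttM_M pi x : x \in M -> x.`_pi \in M.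
Proof. by move=> Mx; apply: (subsetP (pcore_sub pi M)); apply: consttO. Qed.

Lemma Wker_props a : a \in Wker E M ->
  [/\ a \in Aut E, (forall x, x \in M -> a x \in M)
    & (forall x, x \in E -> coset M (a x) = coset M x)].
Proof.
rewrite !inE => /andP[/andP[AEa /eqP aM] /forallP cE]; split => //.
  by move=> x Mx; rewrite -aM; apply: imset_f.
by move=> x Ex; apply/eqP; move/implyP: (cE x); apply.
Qed.

Lemma OpnE p : 'O_p(M) <| E.
Proof. exact: char_normal_trans (pcore_char p M) nME. Qed.

Lemma inOM p x : x \in 'O_p(M) -> x \in M.
Proof. exact: (subsetP (pcore_sub p M)). Qed.

Lemma L1 p a c : a \in Wker E M -> c \in AutComp M p ->
  {in 'O_p(M), forall x, c x = a x} -> c \in StabCoh E p s.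
Proof.
move=> Wa Cc cea; have [AEa aM aC] := Wker_props Wa.
have aMorph x y : x \in E -> y \in E -> a (x * y) = a x * a y.
  by move=> Ex Ey; rewrite (autM AEa).
have aInv x : x \in E -> a x^-1 = (a x)^-1 by move=> Ex; rewrite (autV AEa).
rewrite inE; apply/andP; split.
  rewrite inE Cc /=; apply/forallP => y; apply/implyP => Ey.
  apply/forallP => m; apply/implyP => Om.
  have Mm := inOM Om.
  have Omy : m ^ y \in 'O_p(M).
    by rewrite memJ_norm // (subsetP (normal_norm (OpnE p))).
  have Em := inE_M Mm.
  rewrite !cea // /conjg !aMorph ?aInv ?groupM ?groupV //.
  have Eay : a y \in E by apply: Aut_closed.
  have t_in : a y * y^-1 \in M by apply: coset_eqM => //; rewrite aC.
  rewrite -/(conjg (a m) (a y)) -[a y](mulgKV y) conjgM (conjM (aM _ Mm) t_in).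
  by rewrite /conjg.
pose u k := a (s k) * (s k)^-1.
have uM k : k \in E / M -> u k \in M.
  move=> Gk; apply: coset_eqM; [exact: Aut_closed (sE Gk) | exact: sE | by rewrite aC ?sE].
rewrite /is_coboundary_p; apply/existsP; exists [ffun g => (u g).`_p]; apply/andP; split.
  by apply/forallP => g; apply/implyP => Gg; rewrite ffunE consttO ?uM.
apply/forallP => g; apply/implyP => Gg; apply/forallP => h; apply/implyP => Gh.
rewrite !ffunE /ext_cocycle_p.
set e := ext_cocycle s g h.
have Me : e \in M by apply: epsM.
have Ggh : g * h \in E / M by rewrite groupM.
have ae : a e = u g * (u h) ^ (s g)^-1 * e * (u (g * h))^-1.
  rewrite /e /ext_cocycle /u !aMorph ?aInv ?groupM ?groupV ?sE //.
  rewrite /conjg invgK !invMg !invgK !mulgA mulgKV.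
  by rewrite !mulgKV.
have ce : c e.`_p = (u g * (u h) ^ (s g)^-1 * e * (u (g * h))^-1).`_p.
  rewrite cea ?consttO // -ae -{1}(autmE AEa) (morph_constt (autm AEa) p (inE_M Me)).
  by rewrite autmE.
rewrite ce.
have MuhJ : (u h) ^ (s g)^-1 \in M by rewrite memJM ?uM ?groupV ?sE.
have Mug := uM _ Gg; have Mugh := uM _ Ggh.
have c3 : commute (u g) (u h ^ (s g)^-1) by apply: cmM.
have M1 : u g * u h ^ (s g)^-1 \in M by apply: groupM.
have M2 : u g * u h ^ (s g)^-1 * e \in M by apply: groupM.
have M3 : (u (g * h))^-1 \in M by apply: groupVr.
have c2 : commute (u g * u h ^ (s g)^-1) e by apply: cmM.
have c1 : commute (u g * u h ^ (s g)^-1 * e) (u (g * h))^-1 by apply: cmM.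
rewrite (consttM _ c1) (consttM _ c2) (consttM _ c3).
rewrite consttJ consttV.
set X := _ * _ ^ _; set P := e.`_p; set Z := ((u (g * h)).`_p)^-1.
have cP : commute P Z by apply: cmM; rewrite ?groupV consttM_M.
by apply/eqP; rewrite -(mulgA X P Z) cP mulgA mulgK.
Qed.

Lemma conjL (x w : gT) : x * w = w ^ x^-1 * x.
Proof. by rewrite conjgE invgK !mulgA mulgKV. Qed.

Lemma L2 p c : c \in StabCoh E p s -> c \in etaMW E M.
Proof.
rewrite inE => /andP[Cc cob]; move: Cc; rewrite inE => /andP[Ac /forallP cJ0].
move: Ac; rewrite inE => /andP[AMc /forallP cfix0].
have cfix x : x \in M -> p^'.-elt x -> c x = x.
  by move=> Mx px; apply/eqP; move/implyP: (cfix0 x); apply; rewrite memO.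
have cMM x : x \in M -> c x \in M by move=> Mx; apply: Aut_closed.
have cMul x y : x \in M -> y \in M -> c (x * y) = c x * c y.
  by move=> Mx My; rewrite (autM AMc).
have cdec x : x \in M -> c x = c x.`_p * x.`_p^'.
  move=> Mx; rewrite -{1}(consttC p x) cMul ?consttM_M // (cfix x.`_p^') //.
    exact: consttM_M.
  exact: p_elt_constt.
have cJ n y : n \in M -> y \in E -> c (n ^ y) = c n ^ y.
  move=> Mn Ey; have Mny : n ^ y \in M by apply: memJM.
  rewrite cdec // (cdec n) // conjMg !consttJ; congr (_ * _).
  apply/eqP; move/implyP: (cJ0 y) => /(_ Ey) /forallP /(_ n.`_p) /implyP.
  by apply; apply: consttO.
case/existsP: cob => f /andP[/forallP fO /forallP fcob].
have fM g : g \in E / M -> f g \in M.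
  by move=> Gg; apply: inOM (implyP (fO g) Gg).
have cE g h : g \in E / M -> h \in E / M ->
   c (ext_cocycle s g h) = f g * f h ^ (s g)^-1 * (f (g * h))^-1 * ext_cocycle s g h.
  move=> Gg Gh; set e := ext_cocycle s g h; have Me : e \in M by apply: epsM.
  move/implyP: (fcob g) => /(_ Gg) /forallP /(_ h) /implyP /(_ Gh) /eqP.
  rewrite /ext_cocycle_p -/e => <-.
  rewrite (cdec e Me) -mulgA; congr (_ * _).
  by rewrite -[X in _ = _ * X](consttC p e) mulKg.
pose al x := c (x * (s (coset M x))^-1) * f (coset M x) * s (coset M x).
have cMs x : x \in E -> x * (s (coset M x))^-1 \in M.
  by move=> Ex; apply: coset_eqM; rewrite ?sE ?cs ?mem_quotient.
have alM : {in E &, {morph al : x y / x * y}}.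
  move=> x y Ex Ey; rewrite /al.
  have -> : coset M (x * y) = coset M x * coset M y by rewrite morphM ?inN.
  have Mm := cMs x Ex; have Mn := cMs y Ey.
  move: Mm Mn; set g := coset M x; set h := coset M y => Mm Mn.
  have Gg : g \in E / M by apply: mem_quotient.
  have Gh : h \in E / M by apply: mem_quotient.
  have Ggh : g * h \in E / M by apply: groupM.
  set m := x * (s g)^-1; set n := y * (s h)^-1.
  have dxy : x * y * (s (g * h))^-1 = m * n ^ (s g)^-1 * ext_cocycle s g h.
    by rewrite /m /n /ext_cocycle conjgE invgK !mulgA !mulgKV.
  have Mnj : n ^ (s g)^-1 \in M by rewrite memJM ?groupV ?sE.
  have Me := epsM Gg Gh.
  have M1 : m * n ^ (s g)^-1 \in M by apply: groupM.
  rewrite dxy (cMul _ _ M1 Me) (cMul _ _ Mm Mnj) (cJ _ _ Mn) ?groupV ?sE // (cE _ _ Gg Gh).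
  rewrite -/m -/n.
  move: Me; set e := ext_cocycle s g h => Me.
  have MA := cMM _ Mm; have MB := cMM _ Mn.
  move: MA MB; set A := c m; set B := c n => MA MB.
  have MBj : B ^ (s g)^-1 \in M by rewrite memJM ?groupV ?sE.
  have MFg := fM _ Gg; have MFh := fM _ Gh; have MZ := fM _ Ggh.
  have MFhj : f h ^ (s g)^-1 \in M by rewrite memJM ?groupV ?sE.
  have R : s g * (B * f h * s h) = B ^ (s g)^-1 * f h ^ (s g)^-1 * (e * s (g * h)).
    rewrite /e /ext_cocycle mulgKV.
    by rewrite !conjgE !invgK !mulgA !mulgKV.
  rewrite -(mulgA (A * f g) (s g)) R.
  move: MBj MFhj; set Bj := B ^ _; set Fhj := f h ^ _ => MBj MFhj.
  move: (f g) (f (g * h)) MFg MZ => Fg Z MFg MZ.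
  clearbody e Bj Fhj.
  rewrite !mulgA; congr (_ * _).
  rewrite -(mulgA _ e Z) -(mulgA _ (Z^-1) (e * Z)) -conjgE conjM //.
  congr (_ * _); congr (_ * _).
  by rewrite -!mulgA (cmM MBj MFg).
have alE x : x \in E -> al x \in E.
  move=> Ex; rewrite /al groupM ?groupM ?sE ?mem_quotient //.
    exact: inE_M (cMM _ (cMs x Ex)).
  exact: inE_M (fM _ (mem_quotient M Ex)).
have alC x : x \in E -> coset M (al x) = coset M x.
  move=> Ex; rewrite /al coset_kerl ?cs ?mem_quotient //.
  by rewrite groupM ?cMM ?cMs ?fM ?mem_quotient.
have G1 : (1 : coset_of M) \in E / M by apply: group1.
have Mt : s 1 \in M by apply: coset_idr; rewrite ?inN ?sE ?cs.
have f1 : f 1 = c (s 1) * (s 1)^-1.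
  have := cE 1 1 G1 G1; rewrite /ext_cocycle mulg1 mulgK conjM ?groupV ?fM //.
  by move=> ->; rewrite !mulgK.
have al1 x : x \in M -> al x = c x.
  move=> Mx; rewrite /al coset_id // f1 cMul ?groupV // (autV AMc) //.
  by rewrite !mulgA mulgKV mulgKV.
pose alm : {morphism E >-> gT} := Morphism alM.
have inj : 'injm alm.
  apply/subsetP => x Kx; have Ex : x \in E := dom_ker Kx.
  have ax1 : al x = 1 := mker Kx.
  have Mx : x \in M.
    by apply: coset_idr; rewrite ?inN // -alC // ax1 morph1.
  rewrite inE; apply/eqP; apply: (@perm_inj _ c).
  by rewrite -al1 // ax1 (aut1 AMc).
have im : alm @* E = E.
  apply/(morphim_fixP inj E (subxx _)).
  by apply/subsetP => y /morphimP [x _ Ex ->]; apply: alE.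
set a := aut inj im.
have Aa : a \in Aut E := Aut_aut inj im.
have aE x : x \in E -> a x = al x by move=> Ex; rewrite /a autE.
have Wa : a \in Wker E M.
  rewrite inE; apply/andP; split.
    rewrite inE Aa /= eqEcard card_imset ?leqnn ?andbT; last exact: perm_inj.
    by apply/subsetP => y /imsetP [x Mx ->]; rewrite aE ?inE_M // al1 // cMM.
  by apply/forallP => x; apply/implyP => Ex; rewrite aE // alC.
apply/imsetP; exists a => //.
have nMa : a \in 'N(M | 'P).
  apply/astabsP => z /=; rewrite apermE.
  case Ez: (z \in E); last by rewrite (out_Aut Aa) ?Ez.
  apply/idP/idP => [Maz|Mz]; last by rewrite aE // al1 // cMM.
  by apply: coset_idr; rewrite ?inN // -alC // -aE // coset_id.
apply/permP => x; case Mx: (x \in M).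
  by rewrite restr_permE // aE ?inE_M // al1.
by rewrite (out_perm (restr_perm_on _ _)) ?Mx // (out_Aut AMc) ?Mx.
Qed.

Lemma Wker_norm a : a \in Wker E M -> a \in 'N(M | 'P).
Proof.
move=> Wa; have [Aa aM aC] := Wker_props Wa.
apply/astabsP => z /=; rewrite apermE.
case Ez: (z \in E); last by rewrite (out_Aut Aa) ?Ez.
apply/idP/idP => [Maz|Mz]; last by rewrite aM.
by apply: coset_idr; rewrite ?inN // -aC // coset_id.
Qed.

Lemma Wker_intro a : a \in Aut E -> (forall x, x \in M -> a x \in M) ->
  (forall x, x \in E -> coset M (a x) = coset M x) -> a \in Wker E M.
Proof.
move=> Aa aM aC; rewrite inE; apply/andP; split.
  rewrite inE Aa /= eqEcard card_imset ?leqnn ?andbT; last exact: perm_inj.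
  by apply/subsetP => y /imsetP [x Mx ->]; rewrite aM.
by apply/forallP => x; apply/implyP => Ex; rewrite aC.
Qed.

Lemma Wker_gs : group_set (Wker E M).
Proof.
apply/group_setP; split.
  by apply: Wker_intro => [|x|x]; rewrite ?group1 ?perm1.
move=> a b Wa Wb; have [Aa aM aC] := Wker_props Wa; have [Ab bM bC] := Wker_props Wb.
apply: Wker_intro => [|x Mx|x Ex]; rewrite ?groupM ?permM //.
  by rewrite bM ?aM.
by rewrite bC ?aC // Aut_closed.
Qed.

Lemma etaMW_gs : group_set (etaMW E M).
Proof.
have W1 : (1 : {perm gT}) \in Wker E M by case/group_setP: Wker_gs.
apply/group_setP; split.
  by apply/imsetP; exists 1 => //; rewrite morph1.
move=> c d /imsetP [a Wa ->] /imsetP [b Wb ->].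
apply/imsetP; exists (a * b); first by case/group_setP: Wker_gs => _; apply.
by rewrite morphM ?Wker_norm.
Qed.

Lemma etaMW_Aut c : c \in etaMW E M -> c \in Aut M.
Proof.
case/imsetP => a Wa ->; have [Aa _ _] := Wker_props Wa.
exact: Aut_restr_perm sME _ Aa.
Qed.

Lemma partb p : etaMW E M :&: AutComp M p = StabCoh E p s.
Proof.
apply/setP => c; apply/idP/idP.
  rewrite inE => /andP[/imsetP [a Wa ->] Cc].
  apply: (L1 Wa) => // x Ox.
  exact: restr_permE (Wker_norm Wa) (inOM Ox).
move=> Sc; rewrite inE (L2 Sc) /=.
by move: Sc; rewrite inE => /andP[]; rewrite inE => /andP[].
Qed.

Definition Api (pi : nat_pred) : {set {perm gT}} :=
  [set c in etaMW E M | [forall x in M, pi^'.-elt x ==> (c x == x)]].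

Lemma ApiP pi c : c \in Api pi ->
  [/\ c \in etaMW E M, c \in Aut M & forall x, x \in M -> pi^'.-elt x -> c x = x].
Proof.
rewrite inE => /andP[Ec /forallP fx]; split => //; first exact: etaMW_Aut.
by move=> x Mx px; apply/eqP; move/implyP: (fx x) => /(_ Mx) /implyP; apply.
Qed.

Lemma Api_intro pi c : c \in etaMW E M ->
  (forall x, x \in M -> pi^'.-elt x -> c x = x) -> c \in Api pi.
Proof.
move=> Ec fx; rewrite inE Ec /=; apply/forallP => x; apply/implyP => Mx.
by apply/implyP => px; rewrite fx.
Qed.

Lemma Api_gs pi : group_set (Api pi).
Proof.
apply/group_setP; split.
  by apply: Api_intro => [|x]; [case/group_setP: etaMW_gs | rewrite perm1].
move=> c d /ApiP [Ec _ fc] /ApiP [Ed _ fd]; apply: Api_intro.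
  by case/group_setP: etaMW_gs => _; apply.
by move=> x Mx px; rewrite permM fc ?fd.
Qed.

Lemma WpE (p : nat) : etaMW E M :&: AutComp M p = Api p.
Proof.
apply/setP => c; rewrite inE; apply/andP/idP => [[Ec]|/ApiP [Ec Ac fx]].
  rewrite inE => /andP[Ac /forallP fx]; apply: Api_intro => // x Mx px.
  by apply/eqP; move/implyP: (fx x); apply; rewrite memO.
split => //; rewrite inE Ac /=; apply/forallP => x; apply/implyP => Ox.
have Mx := inOM Ox; by rewrite fx // -memO.
Qed.

Lemma pelt_M_p'1 (p : nat_pred) (x : gT) : p.-elt x -> x.`_p^' = 1.
Proof. by move=> px; apply/constt1P; rewrite p_eltNK. Qed.

Lemma comp (p : nat) e : e \in etaMW E M ->
  exists2 c, c \in Api p & {in M, forall x, c x = e x.`_p * x.`_p^'}.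
Proof.
move=> Ee; have Ae := etaMW_Aut Ee.
case/imsetP: (Ee) => a Wa ee.
pose cf x := e (x.`_p) * x.`_p^'.
have cfM : {in M &, {morph cf : x y / x * y}}.
  move=> x y Mx My; rewrite /cf (consttM _ (cmM Mx My)) (consttM _ (cmM Mx My)).
  rewrite (autM Ae) ?consttM_M //.
  rewrite !mulgA; congr (_ * _); rewrite -!mulgA; congr (_ * _).
  by apply: cmM; [apply: Aut_closed => //; apply: consttM_M | apply: consttM_M].
pose cm : {morphism M >-> gT} := Morphism cfM.
have cfMM x : x \in M -> cf x \in M.
  by move=> Mx; rewrite /cf groupM //; [apply: Aut_closed => //|]; apply: consttM_M.
have inj : 'injm cm.
  apply/subsetP => x Kx; have Mx : x \in M := dom_ker Kx.
  have c1 : e x.`_p * x.`_p^' = 1 := mker Kx.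
  have h : e x.`_p = (x.`_p^')^-1 by rewrite -[e _](mulgK x.`_p^') c1 mul1g.
  have pe : p.-elt (e x.`_p).
    by rewrite -(autmE Ae) morph_p_elt ?consttM_M ?p_elt_constt.
  have p'e : p^'.-elt (e x.`_p) by rewrite h p_eltV p_elt_constt.
  have e1 : e x.`_p = 1 by rewrite -(constt_p_elt pe); apply/constt1P.
  have xp1 : x.`_p = 1 by apply: (@perm_inj _ e); rewrite e1 (aut1 Ae).
  have xp'1 : x.`_p^' = 1 by apply/eqP; rewrite -eq_invg1 -h e1.
  by rewrite inE -(consttC p x) xp1 xp'1 mulg1.
have im : cm @* M = M.
  apply/(morphim_fixP inj M (subxx _)).
  by apply/subsetP => y /morphimP [x _ Mx ->]; apply: cfMM.
set c := aut inj im.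
have Ac : c \in Aut M := Aut_aut inj im.
have cE x : x \in M -> c x = cf x by move=> Mx; rewrite /c autE.
have cfix x : x \in M -> p^'.-elt x -> c x = x.
  move=> Mx px; rewrite cE // /cf (constt_p_elt px).
  by have /constt1P -> := px; rewrite (aut1 Ae) mul1g.
have CC : c \in AutComp M p.
  rewrite inE Ac /=; apply/forallP => x; apply/implyP => Ox.
  have Mx := inOM Ox; by apply/eqP; apply: cfix; rewrite // -memO.
exists c => //; apply: Api_intro => //.
apply: L2; apply: (L1 Wa CC) => x Ox; have Mx := inOM Ox.
have px : p.-elt x by rewrite -memO.
rewrite cE // /cf (constt_p_elt px) pelt_M_p'1 // mulg1 ee.
exact: restr_permE (Wker_norm Wa) Mx.
Qed.

Lemma elt_cons (p : nat) (qs : seq nat) (x : gT) :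
  [pred q | q \in p :: qs]^'.-elt x = p^'.-elt x && [pred q | q \in qs]^'.-elt x.
Proof.
rewrite /p_elt -pnatI; apply: eq_pnat => q; rewrite !inE negb_or //.
Qed.

Lemma p_to_qs' (p : nat) (qs : seq nat) (x : gT) :
  p \notin qs -> p.-elt x -> [pred q | q \in qs]^'.-elt x.
Proof.
move=> pq; apply: sub_p_elt => q; rewrite !inE => /eqP ->; exact: pq.
Qed.

Lemma aut_elt (pi : nat_pred) c x : c \in Aut M -> x \in M -> pi.-elt x -> pi.-elt (c x).
Proof. by move=> Ac Mx px; rewrite -(autmE Ac) morph_p_elt. Qed.

Lemma prodA (ps : seq nat) : uniq ps ->
  \big[dprod/1]_(p <- ps) (etaMW E M :&: AutComp M p) = Api [pred q | q \in ps].
Proof.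
elim: ps => [_|p qs IH] /=.
  rewrite big_nil; apply/setP => c; rewrite inE; apply/idP/idP.
    move/eqP => ->; apply: Api_intro => [|x]; last by rewrite perm1.
    by case/group_setP: etaMW_gs.
  case/ApiP => _ Ac fx; apply/eqP/permP => x; rewrite perm1.
  case Mx: (x \in M); last by rewrite (out_Aut Ac) ?Mx.
  by apply: fx => //; rewrite /p_elt /pnat order_gt0 /=; apply/allP => q _; rewrite !inE in_nil.
case/andP => pnq uq; rewrite big_cons IH // WpE.
set pis := [pred q | q \in qs].
have decM c z : c \in Aut M -> z \in M -> c z = c z.`_p * c z.`_p^'.
  by move=> Ac Mz; rewrite -{1}(consttC p z) (autM Ac) ?consttM_M.
have cent : Api pis \subset 'C(Api p).
  apply/subsetP => d Hd; apply/centP => c Gc.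
  have [_ Ad fd] := ApiP Hd; have [_ Ac fc] := ApiP Gc.
  apply/permP => z; rewrite !permM.
  case Mz: (z \in M); last by rewrite !(out_Aut Ad, out_Aut Ac) ?Mz.
  have Mzp : z.`_p \in M by apply: consttM_M.
  have Mzp' : z.`_p^' \in M by apply: consttM_M.
  have qzp : pis^'.-elt z.`_p by apply: (p_to_qs' (p := p)) => //; apply: p_elt_constt.
  rewrite (decM d z) // (decM c z) // (fd z.`_p) // (fc z.`_p^') ?p_elt_constt //.
  rewrite (autM Ac) ?Aut_closed // (autM Ad) ?Aut_closed //.
  rewrite (fc (d z.`_p^')) ?Aut_closed ?aut_elt ?p_elt_constt //.
  rewrite (fd (c z.`_p)) ?Aut_closed //.
  by apply: (p_to_qs' (p := p)) => //; apply: aut_elt => //; apply: p_elt_constt.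
have triv : Api p :&: Api pis = 1.
  apply/setP => c; rewrite in_setI; apply/andP/set1P => [[Gc Hc]|->].
    have [_ Ac fc] := ApiP Gc; have [_ _ fd] := ApiP Hc.
    apply/permP => z; rewrite perm1.
    case Mz: (z \in M); last by rewrite (out_Aut Ac) ?Mz.
    rewrite decM // (fc z.`_p^') ?consttM_M ?p_elt_constt //.
    rewrite (fd z.`_p) ?consttM_M ?consttC //.
    by apply: (p_to_qs' (p := p)) => //; apply: p_elt_constt.
  by split; case/group_setP: (Api_gs p); case/group_setP: (Api_gs pis).
have -> := dprodE (G := Group (Api_gs p)) (H := Group (Api_gs pis)) cent triv.
rewrite /=; apply/eqP; rewrite eqEsubset; apply/andP; split.
  apply/subsetP => y /mulsgP [c d Gc Hd ->].
  have [Ec Ac fc] := ApiP Gc; have [Ed Ad fd] := ApiP Hd.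
  apply: Api_intro => [|x Mx].
    by case/group_setP: etaMW_gs => _; apply.
  by rewrite elt_cons => /andP[px qx]; rewrite permM fc ?fd.
apply/subsetP => e He; have [Ee Ae fe] := ApiP He.
have [c Gc cE] := comp p Ee; have [Ec Ac _] := ApiP Gc.
have key w : w \in M -> pis^'.-elt w -> e w = c w.
  move=> Mw qw; rewrite cE // -{1}(consttC p w) (autM Ae) ?consttM_M //.
  congr (_ * _); apply: fe; first exact: consttM_M.
  rewrite elt_cons p_elt_constt /=.
  have -> : w.`_p^' = (w.`_p)^-1 * w by rewrite -{3}(consttC p w) mulKg.
  apply: p_eltM => //; first by apply: cmM; rewrite ?groupV ?consttM_M.
  by rewrite p_eltV; apply: (p_to_qs' (p := p)) => //; apply: p_elt_constt.
apply/mulsgP; exists c (c^-1 * e) => //; last by rewrite mulKVg.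
apply: Api_intro => [|z Mz qz].
  by apply: (@groupM _ (Group etaMW_gs)) => //; apply: (@groupVr _ (Group etaMW_gs)).
have Ac' : c^-1 \in Aut M by rewrite groupV.
rewrite permM key ?permKV //; first exact: Aut_closed.
exact: aut_elt.
Qed.

Lemma Api_all (ps : seq nat) : all prime ps ->
  (exponent M %| \prod_(p <- ps) p)%N -> Api [pred q | q \in ps] = etaMW E M.
Proof.
move=> prs ex; apply/setP => c; apply/idP/idP => [/ApiP[] //|Ec].
have Ac := etaMW_Aut Ec.
apply: Api_intro => // x Mx qx.
have pnP : [pred q | q \in ps].-nat (\prod_(p <- ps) p)%N.
  have gen qs : all prime qs -> all (mem ps) qs ->
      [pred q | q \in ps].-nat (\prod_(p <- qs) p)%N.
    elim: qs => [|q qs IH] /=; first by rewrite big_nil.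
    case/andP => pq pqs /andP [iq iqs]; rewrite big_cons pnatM pnatE // !inE.
    by rewrite iq IH.
  by apply: gen => //; apply/allP.
have o1 : #[x] = 1%N.
  apply: (pnat_1 (pi := [pred q | q \in ps])) => //.
  exact: pnat_dvd (dvdn_trans (dvdn_exponent Mx) ex) pnP.
have -> : x = 1 by apply/eqP; rewrite -order_eq1 o1.
exact: aut1 Ac.
Qed.

End Work.

Theorem lemma4p3 (gT : finGroupType) (E M : {group gT}) (ps : seq nat)
  (s : coset_of M -> gT) :
  M <| E -> abelian M ->
  all prime ps -> uniq ps ->
  (exponent M %| \prod_(p <- ps) p)%N ->
  (forall g, g \in E / M -> s g \in E /\ coset M (s g) = g) ->
  \big[dprod/1]_(p <- ps) (etaMW E M :&: AutComp M p) = etaMW E M /\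
  (forall p, p \in ps -> etaMW E M :&: AutComp M p = StabCoh E p s).
Proof.
move=> nME abM prs uq ex hs; split.
  by rewrite (prodA nME abM hs uq) (Api_all nME prs ex).
by move=> p _; apply: (partb nME abM hs).
Qed.
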